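(* Let $k\ge2$, $n\ge k$, $\beta=\sum_{i=1}^n i^{k-1}$ and $c_i=i^{k-1}/\beta$ for $i=1,\dots,n$. In the position-randomized auction setting described in the context, if the $k-1$ disadvantaged bidders all use the initial bid sequence $c_1,\dots,c_n$ and the uniform distribution on permutations, then for every position-randomized strategy of the adversary ${\mathcal A}$, the expected number of objects ${\mathcal A}$ wins is at most $\frac{\beta-1}{n^{k-1}}$.
   Context: Auction model: there are $k$ bidders, one adversary ${\mathcal A}$ and $k-1$ disadvantaged bidders, and $n$ objects auctioned simultaneously. Each object is won by the highest bidder on it; if $m$ bidders tie for the highest bid, each wins with probability $1/m$. A position-randomized bidding algorithm: a bidder chooses an initial sequence $x_1,\dots,x_n$ of positive reals with $\sum x_j\le 1$ (budget) and a probability distribution on permutations $\sigma$ of $\{1,\dots,n\}$; he draws $\sigma$ and bids $x_j$ on object $\sigma(j)$. The disadvantaged bidders draw their permutations independently of each other, and ${\mathcal A}$'s permutation is drawn independently of theirs. *)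

(* Defs.v *)
From HB Require Import structures.
From mathcomp Require Import all_boot all_order all_algebra all_fingroup.
Set Implicit Arguments. Unset Strict Implicit. Unset Printing Implicit Defensive.
Import Order.TTheory GRing.Theory Num.Theory.
Local Open Scope ring_scope.

(* Objects and positions are indexed by 'I_n; position i (0-based) corresponds
   to the paper's index i+1.  A bidder with initial sequence x and permutation
   s bids x i on object s i, i.e. bids x (s^-1 o) on object o. *)

Definition beta (R : realFieldType) (k n : nat) : R :=
  \sum_(i < n) (i.+1)%:R ^+ (k.-1).

Definition cseq (R : realFieldType) (k n : nat) (i : 'I_n) : R :=
  (i.+1)%:R ^+ (k.-1) / beta R k n.

Definition win_share (R : realFieldType) (a : R) (bs : seq R) : R :=
  if has (fun b => a < b) bs then 0
  else 1 / (1 + count (fun b => b == a) bs)%:R.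

Notation profile k n := {ffun 'I_(k.-1) -> 'S_n}.

(* Expected number of objects won by the adversary, when it uses initial
   sequence x and permutation distribution p, and the k-1 disadvantaged
   bidders use initial sequence cseq and independent uniform permutations. *)
Definition expected_wins (R : realFieldType) (k n : nat)
    (x : 'I_n -> R) (p : {ffun 'S_n -> R}) : R :=
  \sum_(s : 'S_n) p s *
    ((\sum_(t : profile k n) \sum_(o : 'I_n)
        win_share (x ((s^-1)%g o))
          [seq @cseq R k n (((t j)^-1)%g o) | j <- enum 'I_(k.-1)])
     / #|{: profile k n}|%:R).

(* Main.v *)
Require Import Defs.
From HB Require Import structures.
From mathcomp Require Import all_boot all_order all_algebra all_fingroup.
From mathcomp Require Import zify ring lra.
Import Order.TTheory GRing.Theory Num.Theory.
Local Open Scope ring_scope.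

Lemma perm_sum_indep (R : realFieldType) n (h : 'I_n -> R) (o o' : 'I_n) :
  \sum_(s : 'S_n) h ((s^-1)%g o) = \sum_(s : 'S_n) h ((s^-1)%g o').
Proof.
rewrite (reindex_inj (mulIg (tperm o o'))) /=.
apply: eq_bigr => s _; congr h.
by rewrite invgM permM tpermV tpermL.
Qed.

Lemma perm_sum_avg (R : realFieldType) n (h : 'I_n -> R) (o : 'I_n) :
  n%:R * \sum_(s : 'S_n) h ((s^-1)%g o) = n`!%:R * \sum_i h i.
Proof.
transitivity (\sum_(o' : 'I_n) \sum_(s : 'S_n) h ((s^-1)%g o')).
  rewrite [RHS](eq_bigr (fun _ => \sum_(s : 'S_n) h ((s^-1)%g o))); last first.
    by move=> o' _; apply: perm_sum_indep.
  by rewrite sumr_const card_ord mulr_natl.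
rewrite exchange_big /=.
transitivity (\sum_(s : 'S_n) \sum_i h i).
  apply: eq_bigr => s _.
  by rewrite [RHS](reindex_inj (@perm_inj _ (s^-1)%g)).
by rewrite sumr_const card_Sn mulr_natl.
Qed.

Lemma big_elem n (P : pred 'I_n) : (0 < #|P|)%N ->
  exists i, P i && (#|P| <= i.+1)%N.
Proof.
move=> hP; case: (boolP [exists i, P i && (#|P| <= i.+1)%N]) => [/existsP //|/existsPn H].
exfalso.
have: (size (map val (enum P)) <= size (iota 0 (#|P|.-1)))%N.
  apply: uniq_leq_size; first by rewrite map_inj_uniq ?enum_uniq //; apply: val_inj.
  move=> v /mapP [i]; rewrite mem_enum => Pi ->.
  have := H i; rewrite (_ : P i = true) // /= mem_iota add0n /=. 
  rewrite -ltnNge => hi; change (\val i) with (nat_of_ord i). move: hP hi. generalize (nat_of_ord i) #|P|. by move=> a [|b] /= _ hb; lia.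
rewrite size_map size_iota -cardE; move: hP; case: #|P| => [|b] //= _; lia.
Qed.
Definition phi (R : realFieldType) K (j : 'I_K.+1) (a b : R) : R :=
  if b < a then 1 else if b == a then (if j == ord0 then 1/2 else 1) else 0.

Arguments phi {R K}.

Lemma ws_le (R : realFieldType) K (a : R) (f : 'I_K.+1 -> R) :
  win_share a [seq f j | j <- enum 'I_K.+1] <= \prod_j phi j a (f j).
Proof.
rewrite /win_share; case: ifP => [/hasP [b /mapP [j _ ->] hj]| /hasPn H].
  rewrite (bigD1 j) //= /phi ltNge (ltW hj) /= gt_eqF // mul0r //.
have Hj : forall j : 'I_K.+1, f j <= a.
  by move=> j; rewrite leNgt; apply: H; apply: map_f; rewrite mem_enum.
rewrite (bigD1 ord0) //= big1 ?mulr1; last first.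
  move=> j /negbTE hj; rewrite /phi hj.
  by have := Hj j; rewrite le_eqVlt => /orP [->|->] //; rewrite if_same.
have hc : forall c : nat, 0 < (1 + c)%:R :> R by move=> c; rewrite ltr0n.
rewrite /phi; case: ifP => hlt.
  rewrite mul1r invr_le1 ?unitfE ?pnatr_eq0 ?hc //; by rewrite ler1n.
have := Hj ord0; rewrite le_eqVlt hlt orbF => /eqP e; rewrite e eqxx /=.
have hcnt : (0 < count (fun b => b == a) [seq f j | j <- enum 'I_K.+1])%N.
  rewrite -has_count; apply/hasP; exists (f ord0); last by rewrite e.
  by apply: map_f; rewrite mem_enum.
rewrite ler_pdivrMr ?hc //.
have : (2 <= 1 + count (fun b => b == a) [seq f j | j <- enum 'I_K.+1])%N by lia.
rewrite -(ler_nat R) => h2; lra.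
Qed.
Lemma beta_nat (R : realFieldType) K n :
  beta R K.+2 n = (\sum_(i < n) (i.+1) ^ K.+1)%:R.
Proof. by rewrite /beta natr_sum; apply: eq_bigr => i _; rewrite natrX. Qed.

Lemma beta_gt0 (R : realFieldType) K n : (0 < n)%N -> 0 < beta R K.+2 n.
Proof.
case: n => [//|n] _; rewrite beta_nat ltr0n big_ord_recl /= exp1n; lia.
Qed.

Lemma per_obj (R : realFieldType) K n (hn : (0 < n)%N) (a : R) (ha : 0 < a) :
  let c := @cseq R K.+2 n in
  let M := #|[pred i | c i <= a]| in
  [/\ (M ^ K.+1)%:R <= beta R K.+2 n * a,
      \prod_(j < K.+1) ((\sum_i phi j a (c i)) / n%:R) <= (M ^ K.+1)%:R / n%:R ^+ K.+1 &
      (M ^ K.+1)%:R = beta R K.+2 n * a ->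
      \prod_(j < K.+1) ((\sum_i phi j a (c i)) / n%:R) <= ((M ^ K.+1)%:R - 1/2) / n%:R ^+ K.+1].
Proof.
move=> c M.
have hb := beta_gt0 R K n hn.
have hn0 : 0 < n%:R :> R by rewrite ltr0n.
pose ind i : R := if c i <= a then 1 else 0.
have Sind : \sum_i ind i = M%:R.
  rewrite /ind -big_mkcond /= sumr_const.
  by rewrite /M; congr (_ *+ _); apply: eq_card.
have phi_le : forall (j : 'I_K.+1) (i : 'I_n), 0 <= phi j a (c i) <= ind i.
  move=> j i; rewrite /phi /ind; case: ifP => h1; first by rewrite (ltW h1) ler01 lexx.
  case: ifP => h2.
    by rewrite (eqP h2) lexx; case: ifP => _; apply/andP; split; lra.
  by rewrite lexx /=; case: ifP.
have S_le : forall j : 'I_K.+1, 0 <= \sum_i phi j a (c i) <= M%:R.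
  move=> j; rewrite -Sind; apply/andP; split.
    by apply: sumr_ge0 => i _; have /andP[] := phi_le j i.
  by apply: ler_sum => i _; have /andP[] := phi_le j i.
have prodE : forall F : 'I_K.+1 -> R,
    \prod_j (F j / n%:R) = (\prod_j F j) / n%:R ^+ K.+1.
  by move=> F; rewrite prodf_div prodr_const card_ord.
have hnX : 0 < n%:R ^+ K.+1 :> R by rewrite exprn_gt0.
split.
- case: (posnP M) => [->|hM].
    rewrite exp0n // mulr_ge0 //; [exact: ltW | exact: ltW].
  have [i /andP [ci hi]] := big_elem _ _ hM.
  apply: (@le_trans _ _ ((i.+1) ^ K.+1)%:R).
    by rewrite ler_nat leq_exp2r.
  move: ci; rewrite /c /cseq /= ler_pdivrMr // natrX mulrC => ->.
  done.
- rewrite prodE ler_pM2r ?invr_gt0 // natrX.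
  have -> : M%:R ^+ K.+1 = \prod_(j < K.+1) (M%:R : R) by rewrite prodr_const card_ord.
  apply: ler_prod => j _; exact: S_le.
- move=> hT.
  have hM : (0 < M)%N.
    case: (posnP M) => // hM0; move: hT; rewrite hM0 exp0n // => h0.
    have : 0 < beta R K.+2 n * a by rewrite mulr_gt0.
    by rewrite -h0 ltxx.
  have hMn : (M.-1 < n)%N.
    have := max_card [pred i | c i <= a]; rewrite card_ord -/M; lia.
  pose i0 := Ordinal hMn.
  have ci0 : c i0 = a.
    rewrite /c /cseq /= prednK // -natrX hT [beta _ _ _ * a]mulrC mulfK //.
    by rewrite gt_eqF.
  have S0 : \sum_i phi (@ord0 K) a (c i) <= M%:R - 1/2.
    rewrite -Sind (bigD1 i0) //= [X in _ <= X - _](bigD1 i0) //=.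
    rewrite /phi /ind ci0 ltxx eqxx lexx /=.
    have : \sum_(i | i != i0) phi (@ord0 K) a (c i) <= \sum_(i | i != i0) ind i.
      by apply: ler_sum => i _; have /andP[] := phi_le ord0 i.
    lra.
  have hM1 : 1 <= M%:R :> R by rewrite ler1n.
  have hMK : 1 <= M%:R ^+ K :> R by rewrite exprn_ege1.
  rewrite prodE ler_pM2r ?invr_gt0 // (bigD1 ord0) //=.
  set P := \prod_(j | j != ord0) _.
  have hP : 0 <= P <= M%:R ^+ K.
    apply/andP; split; first by apply: prodr_ge0 => j _; have /andP[] := S_le j.
    have -> : M%:R ^+ K = \prod_(j < K.+1 | j != ord0) (M%:R : R).
      by rewrite prodr_const cardC1 card_ord.
    by apply: ler_prod => j _; exact: S_le.
  have hS0 := S_le ord0.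
  case/andP: hP => hP0 hP1; case/andP: hS0 => hS00 _.
  apply: (@le_trans _ _ ((M%:R - 1/2) * M%:R ^+ K)).
    apply: ler_pM => //.
  rewrite natrX exprS; nra.
Qed.
Lemma global (R : realFieldType) n (hn2 : (2 <= n)%N) (y w : 'I_n -> R)
  (T : 'I_n -> nat) (bn : nat) (d : R) (hd: 0 < d)
  (hy : \sum_i y i <= 1)
  (hT : forall i, (T i)%:R <= bn%:R * y i)
  (hw : forall i, w i <= (T i)%:R / d)
  (hw' : forall i, (T i)%:R = bn%:R * y i -> w i <= ((T i)%:R - 1/2) / d) :
  \sum_i w i <= (bn%:R - 1) / d.
Proof.
have hbn : 0 <= bn%:R :> R by rewrite ler0n.
have hby : bn%:R * \sum_i y i <= bn%:R :> R.
  by rewrite -[X in _ <= X]mulr1 ler_wpM2l.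
case: (boolP [forall i, (T i)%:R == bn%:R * y i :> R]) => [/forallP Hall | /forallPn [i0 Hi0]].
  apply: (@le_trans _ _ (\sum_i ((bn%:R * y i - 1/2) / d))).
    by apply: ler_sum => i _; rewrite -(eqP (Hall i)); apply: hw'; apply/eqP.
  rewrite -mulr_suml sumrB -mulr_sumr sumr_const card_ord ler_pM2r ?invr_gt0 //.
  have : 2 <= n%:R :> R by rewrite ler_nat.
  rewrite -[(1/2 : R) *+ n]mulr_natr. nra.
have hlt : (\sum_i T i)%:R < bn%:R * \sum_i y i :> R.
  rewrite natr_sum mulr_sumr (bigD1 i0) //= [X in _ < X](bigD1 i0) //=.
  apply: ltr_leD; first by rewrite lt_neqAle Hi0 hT.
  by apply: ler_sum => i _; apply: hT.
have hnat : (\sum_i T i < bn)%N.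
  by rewrite -(ltr_nat R); apply: lt_le_trans hlt hby.
apply: (@le_trans _ _ (\sum_i (T i)%:R / d)).
  by apply: ler_sum => i _; apply: hw.
rewrite -mulr_suml -natr_sum ler_pM2r ?invr_gt0 //.
have : (\sum_i T i + 1 <= bn)%N by lia.
rewrite -(ler_nat R) natrD; lra.
Qed.

Theorem lemma4p4 (R : realFieldType) (k n : nat)
  (hk : (2 <= k)%N) (hn : (k <= n)%N)
  (x : 'I_n -> R) (hxpos : forall i, 0 < x i) (hxsum : \sum_(i < n) x i <= 1)
  (p : {ffun 'S_n -> R}) (hp0 : forall s, 0 <= p s) (hp1 : \sum_(s : 'S_n) p s = 1) :
  expected_wins k x p <= (beta R k n - 1) / (n%:R ^+ (k.-1)).
Proof.
case: k hk hn => [|[|K]] // _ hn /=.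
have hn0 : (0 < n)%N by lia.
have hn2 : (2 <= n)%N by lia.
have hnR : 0 < n%:R :> R by rewrite ltr0n.
have hfR : 0 < n`!%:R :> R by rewrite ltr0n fact_gt0.
set c := @cseq R K.+2 n.
pose Q (a : R) := \prod_(j < K.+1) ((\sum_i phi j a (c i)) / n%:R).
set B := (beta R K.+2 n - 1) / n%:R ^+ K.+1.
have HG : forall s : 'S_n,
  (\sum_(t : profile K.+2 n) \sum_(o : 'I_n)
        win_share (x ((s^-1)%g o))
          [seq c (((t j)^-1)%g o) | j <- enum 'I_(K.+1)])
     / #|{: profile K.+2 n}|%:R <= B.
  move=> s.
  have hN : 0 < #|{: profile K.+2 n}|%:R :> R.
    by rewrite card_ffun card_Sn card_ord natrX exprn_gt0.
  apply: (@le_trans _ _ ((\sum_(t : profile K.+2 n) \sum_(o : 'I_n)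
        \prod_(j < K.+1) phi j (x ((s^-1)%g o)) (c (((t j)^-1)%g o)))
     / #|{: profile K.+2 n}|%:R)).
    rewrite ler_pM2r ?invr_gt0 //; apply: ler_sum => t _; apply: ler_sum => o _.
    exact: (ws_le _ _ (x ((s^-1)%g o)) (fun j => c (((t j)^-1)%g o))).
  have -> : (\sum_(t : profile K.+2 n) \sum_(o : 'I_n)
        \prod_(j < K.+1) phi j (x ((s^-1)%g o)) (c (((t j)^-1)%g o)))
     / #|{: profile K.+2 n}|%:R = \sum_(o : 'I_n) Q (x ((s^-1)%g o)).
    rewrite exchange_big /= mulr_suml; apply: eq_bigr => o _.
    rewrite -(@bigA_distr_bigA _ _ _ _ _ _ _ (fun (j : 'I_K.+1) (sg : 'S_n) => phi j (x ((s^-1)%g o)) (c ((sg^-1)%g o)))) /=.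
    rewrite card_ffun card_Sn card_ord natrX /Q.
    have -> : n`!%:R ^+ K.+1 = \prod_(j < K.+1) (n`!%:R : R) by rewrite prodr_const card_ord.
    rewrite -prodf_div.
    apply: eq_bigr => j _.
    have := perm_sum_avg _ _ (fun i => phi j (x ((s^-1)%g o)) (c i)) o.
    move=> E; apply/eqP; rewrite eqr_div ?(gt_eqF hfR) ?(gt_eqF hnR) //; apply/eqP.
    by rewrite mulrC E mulrC.
  rewrite (reindex_inj (@perm_inj _ s)) /=.
  rewrite (eq_bigr (fun i => Q (x i))); last by move=> i _; rewrite permK.
  rewrite /B beta_nat.
  have := @global R n hn2 x (fun i => Q (x i))
     (fun i => expn #|[pred j : 'I_n | c j <= x i]| K.+1) (\sum_(i < n) i.+1 ^ K.+1)%N (n%:R ^+ K.+1).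
  apply => //.
  - by rewrite exprn_gt0.
  - move=> i; have [h1 _ _] := per_obj R K n hn0 (x i) (hxpos i).
    by rewrite -beta_nat.
  - by move=> i; have [_ h2 _] := per_obj R K n hn0 (x i) (hxpos i).
  - move=> i hi; have [_ _ h3] := per_obj R K n hn0 (x i) (hxpos i).
    by apply: h3; rewrite hi beta_nat.
rewrite /expected_wins.
apply: (@le_trans _ _ (\sum_(s : 'S_n) p s * B)).
  by apply: ler_sum => s _; apply: ler_wpM2l => //; apply: HG.
by rewrite -mulr_suml hp1 mul1r.
Qed.
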